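(* Let $\mathcal{A}$ be a finite abelian group with $|\mathcal{A}|\ge 3$. Let $G$ be the graph consisting of a $5$-cycle $v_1v_2v_3v_4v_5v_1$ together with one further neighbour $u$ of $v_2$, where $u$ is a support vertex all of whose neighbours other than $v_2$ are pendant vertices (so $d(v_2)=3$). Then $G$ is $\mathcal{A}$-vertex magic if and only if $|\mathcal{A}|$ is even.
   Context: A pendant vertex has degree $1$; a support vertex is adjacent to at least one pendant vertex. A map $\ell:V(G)\to\mathcal{A}\setminus\{0\}$ is an $\mathcal{A}$-vertex magic labeling if there is $\mu\in\mathcal{A}$ with $\sum_{w\in N(v)}\ell(w)=\mu$ for every vertex $v$; $G$ is $\mathcal{A}$-vertex magic if such a labeling exists. *)

(* Defs.v *)
From mathcomp Require Import all_boot all_order all_algebra.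
Set Implicit Arguments. Unset Strict Implicit. Unset Printing Implicit Defensive.
Import GRing.Theory.
Local Open Scope ring_scope.

Definition vertex_magic (T : finType) (e : rel T) (A : zmodType) : Prop :=
  exists l : T -> A, (forall v, l v != 0) /\
    exists mu : A, forall v, \sum_(w | e v w) l w = mu.

(* The graph of Corollary 3.11, with k >= 1 pendant neighbours of u.
   Vertices 'I_(k+6): 0,1,2,3,4 = v1,...,v5 (5-cycle), 5 = u (adjacent to v2),
   6,...,k+5 = the pendant neighbours of u. *)
Definition Gadj (k : nat) : rel 'I_(k + 6) := fun x y =>
  let i := nat_of_ord x in let j := nat_of_ord y in
  [|| [&& (i < 5)%N, (j < 5)%N & (i == (j + 1) %% 5)%N || (j == (i + 1) %% 5)%N],
      (i == 1)%N && (j == 5)%N, (i == 5)%N && (j == 1)%N,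
      (i == 5)%N && (6 <= j)%N | (6 <= i)%N && (j == 5)%N].

(* Main.v *)
Require Import Defs.
From mathcomp Require Import all_boot all_order all_algebra.
From mathcomp Require Import all_fingroup all_solvable zify.
Set Implicit Arguments. Unset Strict Implicit. Unset Printing Implicit Defensive.
Import GRing.Theory.
Set Bullet Behavior "Strict Subproofs".

Definition vx k i (H : (i < 6)%N) : 'I_(k+6) := Ordinal (leq_trans H (leq_addl k 6)).
Arguments vx : clear implicits.

Lemma sum2 (A : zmodType) n (P : pred 'I_n) (F : 'I_n -> A) i j :
  i != j -> (forall w, P w = (w == i) || (w == j)) ->
  (\sum_(w | P w) F w = F i + F j)%R.
Proof.
move=> ij HP; rewrite (bigD1 i) ?HP ?eqxx //=; congr (_ + _)%R.
apply: big_pred1 => w /=; rewrite HP; case: (eqVneq w i) => [->|] /=.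
  by rewrite (negbTE ij).
by rewrite andbT.
Qed.

Lemma sum3 (A : zmodType) n (P : pred 'I_n) (F : 'I_n -> A) i j l :
  i != j -> i != l -> j != l -> (forall w, P w = [|| w == i, w == j | w == l]) ->
  (\sum_(w | P w) F w = F i + (F j + F l))%R.
Proof.
move=> ij il jl HP; rewrite (bigD1 i) ?HP ?eqxx //=; congr (_ + _)%R.
apply: sum2 => // w; rewrite HP; case: (eqVneq w i) => [->|] /=.
  by rewrite (negbTE ij) (negbTE il).
by rewrite andbT.
Qed.

Lemma valE k (w : 'I_(k+6)) i H : (w == vx k i H) = (val w == i).
Proof. by []. Qed.

Section G.
Variable k : nat.
Local Notation V i := (@vx k i isT).

Lemma nb0 w : Gadj (V 0) w = (w == V 1) || (w == V 4).
Proof. rewrite !valE /Gadj /=; case: w => [[|[|[|[|[|m]]]]] ?] //=. Qed.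
Lemma nb1 w : Gadj (V 1) w = [|| w == V 0, w == V 2 | w == V 5].
Proof. rewrite !valE /Gadj /=; case: w => [[|[|[|[|[|[|m]]]]]] ?] //=. Qed.
Lemma nb2 w : Gadj (V 2) w = (w == V 1) || (w == V 3).
Proof. rewrite !valE /Gadj /=; case: w => [[|[|[|[|[|m]]]]] ?] //=. Qed.
Lemma nb3 w : Gadj (V 3) w = (w == V 2) || (w == V 4).
Proof. rewrite !valE /Gadj /=; case: w => [[|[|[|[|[|m]]]]] ?] //=. Qed.
Lemma nb4 w : Gadj (V 4) w = (w == V 3) || (w == V 0).
Proof. rewrite !valE /Gadj /=; case: w => [[|[|[|[|[|m]]]]] ?] //=. Qed.
Lemma nb5 w : Gadj (V 5) w = (w == V 1) || (6 <= val w)%N.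
Proof. rewrite !valE /Gadj /=; case: w => [[|[|[|[|[|[|m]]]]]] ?] //=. Qed.
Lemma nbp (p : 'I_(k+6)) w : (6 <= val p)%N -> Gadj p w = (w == V 5).
Proof.
move=> hp; rewrite valE /Gadj /= hp.
have -> : (val p < 5)%N = false by apply/negbTE; rewrite -leqNgt ltnW.
have -> : (val p == 1)%N = false by case: (val p) hp => [|[|]].
have -> : (val p == 5)%N = false by case: (val p) hp => [|[|[|[|[|[|]]]]]].
by [].
Qed.
End G.

Lemma muln_odd (A : zmodType) (a : A) n : (a + a = 0)%R -> (a *+ n = if odd n then a else 0)%R.
Proof.
move=> aa; elim: n => [|n IH]; first by rewrite mulr0n.
rewrite mulrS IH /=; case: (odd n) => /=; by rewrite ?aa ?addr0.
Qed.

Theorem corollary3p11 (A : finZmodType) (k : nat) :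
  (3 <= #|A|)%N -> (0 < k)%N ->
  (vertex_magic (@Gadj k) A <-> ~~ odd #|A|).
Proof.
move=> hA hk; split.
- case=> l [l0 [mu hmu]].
  have p6 : (6 < k + 6)%N by rewrite -{1}(add0n 6) ltn_add2r.
  have e5 : l (vx k 5 isT) = mu.
    by rewrite -(hmu (Ordinal p6)) (big_pred1 (vx k 5 isT)) // => w; rewrite nbp.
  have e0 : (l (vx k 1 isT) + l (vx k 4 isT) = mu)%R by rewrite -(hmu (vx k 0 isT)) (sum2 _ _ (@nb0 k)).
  have e1 : (l (vx k 0 isT) + (l (vx k 2 isT) + l (vx k 5 isT)) = mu)%R by rewrite -(hmu (vx k 1 isT)) (sum3 _ _ _ _ (@nb1 k)).
  have e2 : (l (vx k 1 isT) + l (vx k 3 isT) = mu)%R by rewrite -(hmu (vx k 2 isT)) (sum2 _ _ (@nb2 k)).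
  have e3 : (l (vx k 2 isT) + l (vx k 4 isT) = mu)%R by rewrite -(hmu (vx k 3 isT)) (sum2 _ _ (@nb3 k)).
  have e4 : (l (vx k 3 isT) + l (vx k 0 isT) = mu)%R by rewrite -(hmu (vx k 4 isT)) (sum2 _ _ (@nb4 k)).
  have h1 : l (vx k 4 isT) = l (vx k 3 isT) by apply: (addrI (l (vx k 1 isT))); rewrite e0 e2.
  have h2 : l (vx k 2 isT) = l (vx k 0 isT) by apply: (addIr (l (vx k 3 isT))); rewrite -{1}h1 e3 addrC e4.
  have h3 : (l (vx k 0 isT) + l (vx k 0 isT) = 0)%R.
    by have := e1; rewrite h2 e5 addrA => /(canRL (addrK mu)); rewrite subrr.
  set x : A := l (vx k 0 isT).
  have ox : #[x]%g = 2%N.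
    apply: nt_prime_order => //; first exact (l0 (vx k 0 isT)).
  have := order_dvdG (G := [set: A]%G) (in_setT x).
  by rewrite ox cardsT dvdn2.
- move=> ev.
  have [a _ oa] : {a | a \in [set: A] & #[a]%g = 2%N}.
    by apply: Cauchy => //; rewrite cardsT dvdn2.
  have a0 : a != 0%R.
    apply/negP => /eqP a0; move: oa; rewrite (_ : a = 1%g) ?order1 //.
  have aa : (a + a = 0)%R.
    by have := expg_order a; rewrite oa.
  have [b Hb] : exists b : A, b \notin [set 0%R; a].
    case: (pickP (fun b : A => b \notin [set 0%R; a])) => [b Hb|H]; first by exists b.
    have : (#|[set: A]| <= #|[set 0%R; a]|)%N.
      by apply: subset_leq_card; apply/subsetP => y _; move: (H y) => /= /negbFE.
    by rewrite cardsT cards2 => h; move: (leq_trans hA h); case: (_ != _).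
  move: Hb; rewrite !inE negb_or => /andP[b0 ba].
  pose f (m : nat) : A := if (m < 3)%N then a else if (m < 5)%N then b
     else if m == 5 then (a + b)%R else if m == 6 then (b + a *+ (k - 1))%R else a.
  exists (fun w => f (val w)); split.
    have na : (- a = a)%R by apply/eqP; rewrite eq_sym -addr_eq0 aa.
    have ab0 : (b + a != 0)%R by rewrite addr_eq0 na.
    move=> w; rewrite /f; case: ifP => _ //; case: ifP => _ //.
    case: ifP => _; first by rewrite addrC.
    case: ifP => _ //; rewrite muln_odd //; case: (odd _) => //; by rewrite addr0.
  exists (a + b)%R.
  case=> [[|[|[|[|[|[|m]]]]]] Hm].
  + rewrite (_ : Ordinal Hm = vx k 0 isT); last exact: val_inj.
    by rewrite (sum2 _ _ (@nb0 k)).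
  + rewrite (_ : Ordinal Hm = vx k 1 isT); last exact: val_inj.
    by rewrite (sum3 _ _ _ _ (@nb1 k)) // /f /= (addrA a a) aa add0r.
  + rewrite (_ : Ordinal Hm = vx k 2 isT); last exact: val_inj.
    by rewrite (sum2 _ _ (@nb2 k)).
  + rewrite (_ : Ordinal Hm = vx k 3 isT); last exact: val_inj.
    by rewrite (sum2 _ _ (@nb3 k)).
  + rewrite (_ : Ordinal Hm = vx k 4 isT); last exact: val_inj.
    by rewrite (sum2 _ _ (@nb4 k)) // /f /= addrC.
  + rewrite (_ : Ordinal Hm = vx k 5 isT); last exact: val_inj.
    rewrite (bigD1 (vx k 1 isT)) ?nb5 //=; congr (_ + _)%R.
    rewrite (eq_bigl (fun w : 'I_(k+6) => 6 <= val w)%N); last first.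
      move=> w; rewrite nb5; case: (eqVneq w (vx k 1 isT)) => [->|] //= _.
      by rewrite andbT.
    rewrite -(big_mkord (fun m => 6 <= m)%N f).
    rewrite (big_cat_nat _ (n:=6)) //=.
    rewrite big_nat_cond big1 ?add0r; last first.
      by move=> i /andP[/andP[_ lt] ge]; rewrite ltnNge ge in lt.
    rewrite big_nat_cond (eq_bigl (fun i => (6 <= i < k + 6) && true)%N); last first.
      by move=> i; case: (6 <= i)%N.
    rewrite -big_nat_cond big_ltn; last by rewrite -{1}(add0n 6) ltn_add2r.
    rewrite {1}/f /= (eq_big_nat _ _ (F2 := fun _ => a)); last first.
      move=> i /andP[h _]; have e1 : (i < 3)%N = false by lia.
      have e2 : (i < 5)%N = false by lia.
      have e3 : (i == 5)%N = false by lia.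
      have e4 : (i == 6)%N = false by lia.
      by rewrite /f e1 e2 e3 e4.
    rewrite sumr_const_nat -addrA -mulrnDr.
    have -> : (k - 1 + (k + 6 - 7) = (k - 1).*2)%N by lia.
    by rewrite muln_odd // odd_double addr0.
  + rewrite (big_pred1 (vx k 5 isT)) => [|w]; first by [].
    by rewrite nbp.
Qed.
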